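(* Let $\boldsymbol{H}\in\mathbb{F}_q^{r\times m}$, $k\in\{2,\dots,r\}$, $i\in L\subseteq[m]$, and regard all entries of $\boldsymbol{H}_{[k]}^{L}$ as fixed except $h_{k,i}$. If $L$ is a circuit of $\boldsymbol{H}_{[k-1]}$, then there is exactly one value $c\in\mathbb{F}_q$ such that, when $h_{k,i}=c$, the columns of $\boldsymbol{H}_{[k]}$ indexed by $L$ are linearly dependent; for every $h_{k,i}\in\mathbb{F}_q\setminus\{c\}$, $L$ is an independent set of $\boldsymbol{H}_{[k]}$.
   Context: $\boldsymbol{H}_{[k]}$ is the submatrix of the first $k$ rows of $\boldsymbol{H}$ and $\boldsymbol{H}_{[k]}^{L}$ its submatrix with columns in $L$. For a matrix with columns indexed by $[m]$, $S\subseteq[m]$ is independent if the columns indexed by $S$ are linearly independent, dependent otherwise, and a circuit if it is dependent while every proper subset is independent. *)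

(* Defs.v *)
From HB Require Import structures.
From mathcomp Require Import all_boot all_order all_algebra.
Set Implicit Arguments. Unset Strict Implicit. Unset Printing Implicit Defensive.
Import GRing.Theory.
Local Open Scope ring_scope.

(* Columns of H_[k] (first k rows of H) indexed by S are linearly independent:
   every linear relation sum_{l in S} a_l * (column l of H_[k]) = 0 is trivial. *)
Definition indep_rows (F : fieldType) (r m : nat) (H : 'M[F]_(r, m))
    (k : nat) (S : {set 'I_m}) : Prop :=
  forall a : 'I_m -> F,
    (forall j : 'I_r, (j < k)%N -> \sum_(l in S) a l * H j l = 0) ->
    forall l, l \in S -> a l = 0.

Definition dep_rows (F : fieldType) (r m : nat) (H : 'M[F]_(r, m))
    (k : nat) (S : {set 'I_m}) : Prop := ~ indep_rows H k S.

Definition circuit_rows (F : fieldType) (r m : nat) (H : 'M[F]_(r, m))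
    (k : nat) (S : {set 'I_m}) : Prop :=
  dep_rows H k S /\ forall T : {set 'I_m}, T \proper S -> indep_rows H k T.

(* H with the entry in (0-based) row index a0 and column i replaced by c. *)
Definition set_entry (F : fieldType) (r m : nat) (H : 'M[F]_(r, m))
    (a0 : nat) (i : 'I_m) (c : F) : 'M[F]_(r, m) :=
  \matrix_(a < r, b < m) (if (nat_of_ord a == a0) && (b == i) then c else H a b).

(* Main.v *)
Require Import Defs.
From HB Require Import structures.
From mathcomp Require Import all_boot all_order all_algebra.
From Stdlib Require Import Classical.
Import GRing.Theory.
Local Open Scope ring_scope.

(* Rows are 1-based in the paper: h_{k,i} is the entry at 0-based row k.-1. *)
Theorem proposition3 (F : finFieldType) (r m : nat) (H : 'M[F]_(r, m))
    (k : nat) (i : 'I_m) (L : {set 'I_m}) :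
  (2 <= k)%N -> (k <= r)%N -> i \in L ->
  circuit_rows H k.-1 L ->
  exists c : F,
    dep_rows (set_entry H k.-1 i c) k L /\
    forall c' : F, c' != c -> indep_rows (set_entry H k.-1 i c') k L.
Proof.
move=> k2 kr iL [Hdep Hmin].
have [a [Ha [l0 [l0L al0]]]] : exists a : 'I_m -> F,
    (forall j : 'I_r, (j < k.-1)%N -> \sum_(l in L) a l * H j l = 0) /\
    exists l0, l0 \in L /\ a l0 <> 0.
  apply: NNPP => Hn; apply: Hdep => a Ha l lL.
  apply: NNPP => al; apply: Hn; exists a; split => //; by exists l.
have indT := Hmin _ (properD1 iL).
have ai0 : a i != 0.
  apply/eqP => ai.
  have aT : forall l, l \in L :\ i -> a l = 0.
    apply: indT => j jk; have E := Ha j jk.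
    by rewrite (big_setD1 i iL) /= ai mul0r add0r in E.
  apply: al0; case: (eqVneq l0 i) => [->//|ne]; apply: aT.
  by rewrite in_setD1 ne.
have prop : forall b : 'I_m -> F,
    (forall j : 'I_r, (j < k.-1)%N -> \sum_(l in L) b l * H j l = 0) ->
    forall l, l \in L -> b l = b i / a i * a l.
  move=> b Hb l lL.
  pose d l := b l - b i / a i * a l.
  have di : d i = 0 by rewrite /d divfK // subrr.
  have dT : forall l, l \in L :\ i -> d l = 0.
    apply: indT => j jk.
    have : \sum_(l in L) d l * H j l = 0.
      rewrite /d; under eq_bigr => l1 _ do rewrite mulrBl -(mulrA (b i / a i)).
      by rewrite sumrB -mulr_sumr Hb // Ha // mulr0 subrr.
    by rewrite (big_setD1 i iL) /= di mul0r add0r.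
  apply/eqP; rewrite -subr_eq0; apply/eqP.
  case: (eqVneq l i) => [->//|ne]; apply: dT; by rewrite in_setD1 ne.
have k1r : (k.-1 < r)%N by rewrite prednK ?(leq_trans _ k2).
pose j0 : 'I_r := Ordinal k1r.
pose s := \sum_(l in L :\ i) a l * H j0 l.
have sE : forall c (b : 'I_m -> F),
    \sum_(l in L) b l * set_entry H k.-1 i c j0 l
    = b i * c + \sum_(l in L :\ i) b l * H j0 l.
  move=> c b; rewrite (big_setD1 i iL) /= /set_entry mxE /= !eqxx /=; congr (_ + _).
  apply: eq_bigr => l; rewrite in_setD1 mxE eqxx /= => /andP[ne _].
  by rewrite (negbTE ne).
have rowE : forall c (j : 'I_r) l, (j < k.-1)%N -> set_entry H k.-1 i c j l = H j l.
  move=> c j l jk; rewrite mxE.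
  by rewrite (_ : (nat_of_ord j == k.-1) = false) // ltn_eqF.
have sumE : forall c (b : 'I_m -> F) (j : 'I_r), (j < k.-1)%N ->
    \sum_(l in L) b l * set_entry H k.-1 i c j l = \sum_(l in L) b l * H j l.
  by move=> c b j jk; apply: eq_bigr => l _; rewrite rowE.
have jsplit : forall j : 'I_r, (j < k)%N -> (j < k.-1)%N \/ j = j0.
  move=> j jk; case: (ltnP j k.-1) => h; [by left | right].
  apply: val_inj => /=; apply/eqP; rewrite eqn_leq h andbT.
  by rewrite -ltnS prednK // (leq_trans _ k2).
exists (- s / a i); split.
  move=> Hind; have ai0b := ai0; move/eqP: ai0b; apply; apply: (Hind a) => // j jk.
  case: (jsplit j jk) => [jk'|->]; first by rewrite sumE // Ha.
  by rewrite sE mulrC (divfK ai0) -/s addNr.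
move=> c' ne b Hb l lL.
have Hb' : forall j : 'I_r, (j < k.-1)%N -> \sum_(l in L) b l * H j l = 0.
  move=> j jk; rewrite -(sumE c') // Hb //.
  by apply: (leq_trans jk); rewrite leq_pred.
have bE := prop b Hb'.
have jk0 : (j0 < k)%N by rewrite /= prednK // ltnW.
have E : \sum_(l in L :\ i) b l * H j0 l = b i / a i * s.
  rewrite /s mulr_sumr; apply: eq_bigr => l'; rewrite in_setD1 => /andP[_ l'L].
  by rewrite (bE l' l'L) mulrA.
have bi : b i = b i / a i * a i by rewrite (divfK ai0).
have := Hb j0 jk0; rewrite sE E {1}bi -(mulrA (b i / a i)) -mulrDr => /eqP.
rewrite mulf_eq0 => /orP[/eqP l0E|].
  by rewrite (bE l lL) l0E mul0r.
rewrite addr_eq0 => /eqP h; move/eqP: ne; case.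
by rewrite -h mulrC mulKf.
Qed.
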